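(* Let $p:X\to Y$ be a continuous map with overlay structure $\mathcal S$, and assume $X$ is connected. Let $G$ be the group of deck transformations of $p$ preserving $\mathcal S$. Then the action of $G$ on $X$ is an overlay action with overlay structure $\mathcal S$. Moreover, $p=q\circ\pi$, where $\pi:X\to X/G$ is the projection onto the orbit space (quotient topology) and $q:X/G\to Y$ is an overlay with overlay structure $\{\pi(U):U\in\mathcal S\}$.
   Context: A deck transformation of $p$ is a homeomorphism $h:X\to X$ with $p\circ h=p$; it preserves $\mathcal S$ if $h(U)\in\mathcal S$ for every $U\in\mathcal S$. For a continuous map $p:X\to Y$: a slice of $p$ is an open set $U\subseteq X$ such that $p^{-1}(p(U))$ is the disjoint union of a family of open sets $U_s$ ($s\in S$), each mapped by $p$ homeomorphically onto $p(U)$, with $U=U_t$ for some $t\in S$. A covering structure of $p$ is an open cover $\mathcal S$ of $X$ by slices of $p$ such that for every $U\in\mathcal S$, $p^{-1}(p(U))$ is the disjoint union of a family $\{U_j\}_{j\in J}$ of elements of $\mathcal S$, each mapped homeomorphically onto $p(U)$. For $x\in X$, $st(x,\mathcal S)=\bigcup\{U\in\mathcal S: x\in U\}$. An overlay structure of $p$ is a covering structure $\mathcal S$ such that $st(x,\mathcal S)$ is a slice of $p$ for every $x\in X$; $p$ is an overlay if it has one. For a free action of a group $G$ on $X$: a slice of the action is an open $U\subseteq X$ with $U\cap(g\cdot U)\neq\emptyset\Rightarrow g=1_G$. The action is an overlay action with overlay structure $\mathcal U$ if $\mathcal U$ is a covering structure of the projection $X\to X/G$ such that $st(x,\mathcal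 U)$ is a slice of the action for every $x\in X$. *)

(* Defs.v *)
From Stdlib Require Import Classical FunctionalExtensionality PropExtensionality.

Set Implicit Arguments.

Record topology (X : Type) := Topology {
  open : (X -> Prop) -> Prop;
  open_setT : open (fun _ => True);
  open_setI : forall U V, open U -> open V -> open (fun x => U x /\ V x);
  open_bigU : forall F : (X -> Prop) -> Prop,
      (forall U, F U -> open U) -> open (fun x => exists U, F U /\ U x)
}.
Arguments open {X} t U.

Definition continuous {X Y : Type} (tX : topology X) (tY : topology Y)
  (f : X -> Y) : Prop :=
  forall V, open tY V -> open tX (fun x => V (f x)).

Definition connected {X : Type} (tX : topology X) : Prop :=
  ~ exists U V : X -> Prop,
      open tX U /\ open tX V /\ (exists x, U x) /\ (exists x, V x) /\
      (forall x, U x \/ V x) /\ (forall x, ~ (U x /\ V x)).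

Definition image {X Y : Type} (f : X -> Y) (U : X -> Prop) : Y -> Prop :=
  fun y => exists x, U x /\ f x = y.

(* f maps the subspace A of X homeomorphically onto the subspace B of Y
   (subspace topologies written out). *)
Definition homeo_onto {X Y : Type} (tX : topology X) (tY : topology Y)
  (f : X -> Y) (A : X -> Prop) (B : Y -> Prop) : Prop :=
  (forall x, A x -> B (f x)) /\
  (forall x1 x2, A x1 -> A x2 -> f x1 = f x2 -> x1 = x2) /\
  (forall y, B y -> exists x, A x /\ f x = y) /\
  (* continuity of f|A : A -> B *)
  (forall V, open tY V -> exists W, open tX W /\ forall x, A x -> (W x <-> V (f x))) /\
  (* continuity of the inverse B -> A *)
  (forall W, open tX W -> exists V, open tY V /\ forall x, A x -> (W x <-> V (f x))).

Definition sheet_decomp {X Y : Type} (tX : topology X) (tY : topology Y)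
  (p : X -> Y) (U : X -> Prop) {I : Type} (F : I -> X -> Prop) : Prop :=
  (forall i, open tX (F i)) /\
  (forall i j x, F i x -> F j x -> i = j) /\
  (forall x, image p U (p x) <-> exists i, F i x) /\
  (forall i, homeo_onto tX tY p (F i) (image p U)).

Definition slice {X Y : Type} (tX : topology X) (tY : topology Y)
  (p : X -> Y) (U : X -> Prop) : Prop :=
  open tX U /\
  exists (I : Type) (F : I -> X -> Prop),
    sheet_decomp tX tY p U F /\ exists t, forall x, F t x <-> U x.

Definition covering_structure {X Y : Type} (tX : topology X) (tY : topology Y)
  (p : X -> Y) (S : (X -> Prop) -> Prop) : Prop :=
  (forall U, S U -> open tX U) /\
  (forall x, exists U, S U /\ U x) /\
  (forall U, S U -> slice tX tY p U) /\
  (forall U, S U -> exists (J : Type) (F : J -> X -> Prop),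
        (forall j, S (F j)) /\ sheet_decomp tX tY p U F).

Definition star {X : Type} (S : (X -> Prop) -> Prop) (x : X) : X -> Prop :=
  fun y => exists U, S U /\ U x /\ U y.

Definition overlay_structure {X Y : Type} (tX : topology X) (tY : topology Y)
  (p : X -> Y) (S : (X -> Prop) -> Prop) : Prop :=
  covering_structure tX tY p S /\ forall x, slice tX tY p (star S x).

Definition overlay {X Y : Type} (tX : topology X) (tY : topology Y)
  (p : X -> Y) : Prop :=
  continuous tX tY p /\ exists S, overlay_structure tX tY p S.

Definition homeomorphism {X : Type} (tX : topology X) (h : X -> X) : Prop :=
  continuous tX tX h /\
  exists k : X -> X, continuous tX tX k /\
    (forall x, k (h x) = x) /\ (forall x, h (k x) = x).

Definition deck_transformation {X Y : Type} (tX : topology X)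
  (p : X -> Y) (h : X -> X) : Prop :=
  homeomorphism tX h /\ forall x, p (h x) = p x.

Definition deck_preserving {X Y : Type} (tX : topology X)
  (p : X -> Y) (S : (X -> Prop) -> Prop) : (X -> X) -> Prop :=
  fun h => deck_transformation tX p h /\ forall U, S U -> S (image h U).

Definition orbit {X : Type} (G : (X -> X) -> Prop) (x : X) : X -> Prop :=
  fun y => exists g, G g /\ g x = y.

Definition orbit_space {X : Type} (G : (X -> X) -> Prop) : Type :=
  { O : X -> Prop | exists x, O = orbit G x }.

Definition orbit_proj {X : Type} (G : (X -> X) -> Prop) (x : X) : orbit_space G :=
  exist _ (orbit G x) (ex_intro _ x eq_refl).

Section QuotTop.
Variables (X Q : Type) (tX : topology X) (f : X -> Q).

Definition quot_open (V : Q -> Prop) : Prop := open tX (fun x => V (f x)).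

Lemma quot_open_setT : quot_open (fun _ => True).
Proof. exact (open_setT tX). Qed.

Lemma quot_open_setI U V : quot_open U -> quot_open V ->
  quot_open (fun x => U x /\ V x).
Proof. intros; apply (open_setI tX); assumption. Qed.

Lemma quot_open_bigU (F : (Q -> Prop) -> Prop) :
  (forall U, F U -> quot_open U) -> quot_open (fun x => exists U, F U /\ U x).
Proof.
  intro H. unfold quot_open.
  set (F' := fun W : X -> Prop => exists U, F U /\ W = (fun x => U (f x))).
  assert (E : (fun x => exists U, F U /\ U (f x)) =
              (fun x => exists W, F' W /\ W x)).
  { apply functional_extensionality; intro x; apply propositional_extensionality.
    split.
    - intros [U [HU Hx]]. exists (fun x => U (f x)). split; [exists U; auto | exact Hx].
    - intros [W [[U [HU ->]] Hx]]. exists U; auto. }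
  rewrite E. apply (open_bigU tX). intros W [U [HU ->]]. apply H; exact HU.
Qed.

Definition quotient_topology : topology Q :=
  @Topology Q quot_open quot_open_setT quot_open_setI quot_open_bigU.
End QuotTop.

Definition orbit_topology {X : Type} (tX : topology X) (G : (X -> X) -> Prop)
  : topology (orbit_space G) := quotient_topology tX (orbit_proj G).

Definition free_action {X : Type} (G : (X -> X) -> Prop) : Prop :=
  forall g x, G g -> g x = x -> g = (fun y => y).

Definition action_slice {X : Type} (tX : topology X) (G : (X -> X) -> Prop)
  (U : X -> Prop) : Prop :=
  open tX U /\
  forall g, G g -> (exists y, U y /\ image g U y) -> g = (fun y => y).

Definition overlay_action {X : Type} (tX : topology X) (G : (X -> X) -> Prop)
  (U : (X -> Prop) -> Prop) : Prop :=
  free_action G /\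
  covering_structure tX (orbit_topology tX G) (orbit_proj G) U /\
  forall x, action_slice tX G (star U x).

Definition image_family {X Y : Type} (f : X -> Y) (S : (X -> Prop) -> Prop)
  : (Y -> Prop) -> Prop :=
  fun W => exists U, S U /\ W = image f U.

(* Main.v *)
Require Import Defs.
From Stdlib Require Import Classical FunctionalExtensionality PropExtensionality ProofIrrelevance ClassicalEpsilon.
Set Implicit Arguments.

Lemma pext {A : Type} (P Q : A -> Prop) : (forall x, P x <-> Q x) -> P = Q.
Proof. intro H; apply functional_extensionality; intro x; apply propositional_extensionality; apply H. Qed.

Lemma sig_ext {A : Type} (P : A -> Prop) (s1 s2 : {x | P x}) :
  proj1_sig s1 = proj1_sig s2 -> s1 = s2.
Proof. destruct s1 as [a pa], s2 as [b pb]; simpl; intros ->. f_equal; apply proof_irrelevance. Qed.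

Lemma homeo_img {X Y} (tX : topology X) (tY : topology Y) f A B :
  homeo_onto tX tY f A B -> forall y, image f A y <-> B y.
Proof.
  intros [Hm [_ [Hs _]]] y; split.
  - intros [x [Ax <-]]; auto.
  - intros By; destruct (Hs y By) as [x [Ax E]]; exists x; auto.
Qed.

Lemma homeo_inj {X Y} (tX : topology X) (tY : topology Y) f A B :
  homeo_onto tX tY f A B -> forall a b, A a -> A b -> f a = f b -> a = b.
Proof. intros [_ [Hi _]]; exact Hi. Qed.

Lemma slice_homeo {X Y} (tX : topology X) (tY : topology Y) p U :
  slice tX tY p U -> homeo_onto tX tY p U (image p U).
Proof.
  intros [Ho [I [F [[Fo [Fd [Fc Fh]]] [t Ht]]]]].
  assert (E : F t = U) by (apply pext; exact Ht).
  pose proof (Fh t) as H. rewrite E in H. exact H.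
Qed.

Lemma slice_inj {X Y} (tX : topology X) (tY : topology Y) p U :
  slice tX tY p U -> forall a b, U a -> U b -> p a = p b -> a = b.
Proof. intro H; exact (homeo_inj (slice_homeo H)). Qed.

Lemma open_local {X} (tX : topology X) (A : X -> Prop) :
  (forall x, A x -> exists N, open tX N /\ N x /\ forall z, N z -> A z) -> open tX A.
Proof.
  intro H.
  assert (E : A = fun x => exists N, (open tX N /\ forall z, N z -> A z) /\ N x).
  { apply pext; intro x; split.
    - intro Ax; destruct (H x Ax) as [N [HN [Nx HNA]]]; exists N; auto.
    - intros [N [[_ HNA] Nx]]; auto. }
  rewrite E. apply open_bigU. intros N [HN _]; exact HN.
Qed.

Lemma sheet_img {X Y} (tX : topology X) (tY : topology Y) p U I (F : I -> X -> Prop) :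
  sheet_decomp tX tY p U F -> forall i y, image p (F i) y <-> image p U y.
Proof. intros [_ [_ [_ Fh]]] i; exact (homeo_img (Fh i)). Qed.

Lemma fix_id {X Y} (tX : topology X) (tY : topology Y) p S :
  covering_structure tX tY p S -> connected tX ->
  forall f, continuous tX tX f -> (forall x, p (f x) = p x) ->
  forall x0, f x0 = x0 -> f = fun y => y.
Proof.
  intros [So [Sc [Ss Sd]]] Hc f Hf Hpf x0 Hx0.
  assert (O1 : open tX (fun y => f y = y)).
  { apply open_local; intros y Hy.
    destruct (Sc y) as [U [SU Uy]].
    exists (fun z => U z /\ U (f z)); split; [|split].
    - apply open_setI; [apply So; auto | apply Hf; apply So; auto].
    - rewrite Hy; auto.
    - intros z [Uz Ufz]. apply (slice_inj (Ss U SU)); auto. }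
  assert (O2 : open tX (fun y => f y <> y)).
  { apply open_local; intros y Hy.
    destruct (Sc y) as [U [SU Uy]].
    destruct (Ss U SU) as [HoU [I [F [[Fo [Fd [Fc Fh]]] [t Ht]]]]].
    assert (Hi : exists i, F i (f y)).
    { apply Fc. exists y; split; auto. }
    destruct Hi as [i Hi].
    exists (fun z => F t z /\ F i (f z)); split; [|split].
    - apply open_setI; [apply Fo | apply Hf; apply Fo].
    - split; [apply Ht; auto | auto].
    - intros z [Ftz Fifz] E. rewrite E in Fifz.
      assert (i = t) by (apply (Fd i t z); auto). subst i.
      apply Hy. apply (slice_inj (Ss U SU)); auto; apply Ht; auto. }
  apply functional_extensionality; intro y.
  apply NNPP; intro Hn. apply Hc.
  exists (fun y => f y = y), (fun y => f y <> y).
  repeat split; auto.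
  - exists x0; auto.
  - exists y; auto.
  - intro z; apply classic.
  - intros z [H1 H2]; auto.
Qed.

Lemma same_sheet {X Y} (tX : topology X) (tY : topology Y) p S :
  overlay_structure tX tY p S -> forall A B z, S A -> S B -> A z -> B z ->
  (forall y, image p A y <-> image p B y) -> A = B.
Proof.
  intros [_ Hst] A B z SA SB Az Bz Hi.
  pose proof (slice_inj (Hst z)) as Inj.
  apply pext; intro x; split; intro Hx.
  - destruct (proj1 (Hi (p x)) (ex_intro _ x (conj Hx eq_refl))) as [b [Bb Eb]].
    assert (x = b) as ->; [|exact Bb].
    apply Inj; [exists A; auto | exists B; auto | auto].
  - destruct (proj2 (Hi (p x)) (ex_intro _ x (conj Hx eq_refl))) as [a [Aa Ea]].
    assert (x = a) as ->; [|exact Aa].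
    apply Inj; [exists B; auto | exists A; auto | auto].
Qed.

Lemma image_inv_eq {X} (h k : X -> X) (A : X -> Prop) :
  (forall x, k (h x) = x) -> (forall x, h (k x) = x) ->
  image h A = fun z => A (k z).
Proof.
  intros H1 H2; apply pext; intro z; split.
  - intros [a [Aa <-]]; rewrite H1; auto.
  - intro Az; exists (k z); auto.
Qed.

Lemma image_homeo_open {X} (tX : topology X) h A :
  homeomorphism tX h -> open tX A -> open tX (image h A).
Proof.
  intros [_ [k [Hk [H1 H2]]]] HA. rewrite (@image_inv_eq _ h k A H1 H2). apply Hk; auto.
Qed.

Lemma image_id {X} (A : X -> Prop) : image (fun y => y) A = A.
Proof. apply pext; intro z; split; [intros [a [Aa <-]]; auto | intro; exists z; auto]. Qed.

Lemma image_comp {X} (g h : X -> X) (A : X -> Prop) :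
  image (fun x => g (h x)) A = image g (image h A).
Proof.
  apply pext; intro z; split.
  - intros [a [Aa <-]]; exists (h a); split; auto; exists a; auto.
  - intros [b [[a [Aa <-]] <-]]; exists a; auto.
Qed.

Lemma G_id {X Y} (tX : topology X) (p : X -> Y) S :
  deck_preserving tX p S (fun y => y).
Proof.
  split; [split|].
  - split; [intros V HV; exact HV|]. exists (fun y => y); repeat split; auto; intros V HV; exact HV.
  - auto.
  - intros U SU; rewrite image_id; auto.
Qed.

Lemma G_comp {X Y} (tX : topology X) (p : X -> Y) S g h :
  deck_preserving tX p S g -> deck_preserving tX p S h ->
  deck_preserving tX p S (fun x => g (h x)).
Proof.
  intros [[[Cg [kg [Ckg [g1 g2]]]] Pg] Sg] [[[Ch [kh [Ckh [h1 h2]]]] Ph] Sh].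
  split; [split|].
  - split.
    + intros V HV. apply (Ch (fun x => V (g x))). apply Cg; auto.
    + exists (fun x => kh (kg x)); repeat split.
      * intros V HV. apply (Ckg (fun x => V (kh x))). apply Ckh; auto.
      * intro x; rewrite g1, h1; auto.
      * intro x; rewrite h2, g2; auto.
  - intro x; rewrite Pg, Ph; auto.
  - intros U SU; rewrite image_comp; auto.
Qed.

Lemma G_cont {X Y} (tX : topology X) (p : X -> Y) S g :
  deck_preserving tX p S g -> continuous tX tX g.
Proof. intros [[[C _] _] _]; exact C. Qed.

Lemma G_p {X Y} (tX : topology X) (p : X -> Y) S g :
  deck_preserving tX p S g -> forall x, p (g x) = p x.
Proof. intros [[_ P] _]; exact P. Qed.

Lemma G_S {X Y} (tX : topology X) (p : X -> Y) S g :
  deck_preserving tX p S g -> forall U, S U -> S (image g U).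
Proof. intros [_ H]; exact H. Qed.

Lemma G_homeo {X Y} (tX : topology X) (p : X -> Y) S g :
  deck_preserving tX p S g -> homeomorphism tX g.
Proof. intros [[H _] _]; exact H. Qed.

Lemma G_inv {X Y} (tX : topology X) (tY : topology Y) p S :
  overlay_structure tX tY p S -> forall h, deck_preserving tX p S h ->
  exists k, deck_preserving tX p S k /\ (forall x, k (h x) = x) /\ (forall x, h (k x) = x).
Proof.
  intros HS h Hh.
  destruct Hh as [[[Ch [k [Ck [h1 h2]]]] Ph] Sh].
  exists k; split; [|split; auto].
  assert (Pk : forall x, p (k x) = p x).
  { intro x. rewrite <- (Ph (k x)), h2; auto. }
  split; [split; [split; [auto| exists h; auto] | auto]|].
  intros V SV.
  destruct (classic (exists v, V v)) as [[v Vv]|Hne].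
  - pose proof HS as [[So [Sc [Ss Sd]]] Hst].
    destruct (Sd V SV) as [J [F [FS Fdec]]].
    pose proof Fdec as [Fo [Fd [Fc Fh]]].
    destruct (proj1 (Fc (k v)) (ex_intro _ v (conj Vv (eq_sym (Pk v))))) as [j Fj].
    assert (E : image h (F j) = V).
    { apply (same_sheet HS v); auto.
      - exists (k v); auto.
      - intro y. rewrite <- (sheet_img Fdec j y). split.
        + intros [b [[a [Fa <-]] <-]]. exists a; split; auto.
        + intros [a [Fa <-]]. exists (h a); split; [exists a; auto| auto]. }
    rewrite <- E, <- image_comp.
    replace (image (fun x => k (h x)) (F j)) with (F j); auto.
    rewrite <- (image_id (F j)) at 1. f_equal. apply functional_extensionality; intro; auto.
  - replace (image k V) with V; auto.
    apply pext; intro z; split; intro H; exfalso; apply Hne.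
    + exists z; auto.
    + destruct H as [a [Va _]]; exists a; auto.
Qed.

Lemma pi_surj {X} (G : (X -> X) -> Prop) (xi : orbit_space G) :
  exists x, xi = orbit_proj G x.
Proof.
  destruct xi as [O [x Ox]]. exists x. apply sig_ext. simpl. exact Ox.
Qed.

Lemma pi_eq {X Y} (tX : topology X) (tY : topology Y) p S :
  overlay_structure tX tY p S -> forall a b,
  orbit_proj (deck_preserving tX p S) a = orbit_proj (deck_preserving tX p S) b <->
  exists h, deck_preserving tX p S h /\ h a = b.
Proof.
  intros HS a b; split.
  - intro E. apply (f_equal (@proj1_sig _ _)) in E. simpl in E.
    assert (Hb : orbit (deck_preserving tX p S) b b) by (exists (fun y => y); split; [apply G_id|auto]).
    rewrite <- E in Hb. exact Hb.
  - intros [h [Gh <-]]. apply sig_ext; simpl.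
    destruct (G_inv HS Gh) as [k [Gk [k1 k2]]].
    apply pext; intro y; split.
    + intros [g [Gg <-]]. exists (fun x => g (k x)); split; [apply G_comp; auto|]. rewrite k1; auto.
    + intros [g [Gg <-]]. exists (fun x => g (h x)); split; [apply G_comp; auto|auto].
Qed.

Lemma pi_G {X Y} (tX : topology X) (tY : topology Y) p S :
  overlay_structure tX tY p S -> forall h x, deck_preserving tX p S h ->
  orbit_proj (deck_preserving tX p S) (h x) = orbit_proj (deck_preserving tX p S) x.
Proof.
  intros HS h x Gh. symmetry. apply (pi_eq HS). exists h; auto.
Qed.

Lemma pi_image_G {X Y} (tX : topology X) (tY : topology Y) p S :
  overlay_structure tX tY p S -> forall h V, deck_preserving tX p S h ->
  image (orbit_proj (deck_preserving tX p S)) (image h V) =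
  image (orbit_proj (deck_preserving tX p S)) V.
Proof.
  intros HS h V Gh. apply pext; intro xi; split.
  - intros [b [[a [Va <-]] <-]]. exists a; split; auto. symmetry; apply (pi_G HS); auto.
  - intros [a [Va <-]]. exists (h a); split; [exists a; auto|]. apply (pi_G HS); auto.
Qed.

Lemma pi_open {X Y} (tX : topology X) (tY : topology Y) p S :
  overlay_structure tX tY p S -> forall A, open tX A ->
  open (orbit_topology tX (deck_preserving tX p S)) (image (orbit_proj (deck_preserving tX p S)) A).
Proof.
  intros HS A HA.
  change (open tX (fun x => image (orbit_proj (deck_preserving tX p S)) A
                               (orbit_proj (deck_preserving tX p S) x))).
  apply open_local. intros x [a [Aa E]].
  apply (pi_eq HS) in E. destruct E as [h [Gh <-]].
  exists (image h A); split; [|split].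
  - apply image_homeo_open; [exact (G_homeo Gh)|auto].
  - exists a; auto.
  - intros z [a' [Aa' <-]]. exists a'; split; auto. symmetry; apply (pi_G HS); auto.
Qed.

Lemma free_G {X Y} (tX : topology X) (tY : topology Y) p S :
  overlay_structure tX tY p S -> connected tX -> free_action (deck_preserving tX p S).
Proof.
  intros HS Hc g x Gg Hx. apply (fix_id (proj1 HS) Hc (G_cont Gg) (G_p Gg) Hx).
Qed.

Lemma star_open {X Y} (tX : topology X) (tY : topology Y) p S :
  overlay_structure tX tY p S -> forall x, open tX (star S x).
Proof. intros [_ Hst] x; apply (Hst x). Qed.

Lemma pi_decomp {X Y} (tX : topology X) (tY : topology Y) p S :
  overlay_structure tX tY p S -> connected tX -> forall U, S U ->
  sheet_decomp tX (orbit_topology tX (deck_preserving tX p S))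
    (orbit_proj (deck_preserving tX p S)) U
    (fun g : {g | deck_preserving tX p S g} => image (proj1_sig g) U).
Proof.
  intros HS Hc U SU.
  pose proof HS as [[So [Sc [Ss Sd]]] Hst].
  assert (InjgU : forall g, deck_preserving tX p S g -> forall a b,
            image g U a -> image g U b ->
            orbit_proj (deck_preserving tX p S) a = orbit_proj (deck_preserving tX p S) b -> a = b).
  { intros g Gg a b Ha Hb E. apply (pi_eq HS) in E. destruct E as [h [Gh <-]].
    apply (slice_inj (Ss _ (G_S Gg _ SU))); auto. rewrite (G_p Gh); auto. }
  split; [|split; [|split]].
  - intros [g Gg]; simpl. apply So. apply (G_S Gg); auto.
  - intros [g Gg] [h Gh] x [u1 [U1 E1]] [u2 [U2 E2]]. apply sig_ext; simpl; simpl in E1, E2.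
    assert (u1 = u2) as <-.
    { apply (slice_inj (Ss U SU)); auto. rewrite <- (G_p Gg u1), <- (G_p Gh u2), E1, E2; auto. }
    destruct (G_inv HS Gh) as [k [Gk [k1 k2]]].
    assert (Hf : (fun z => k (g z)) = fun z => z).
    { apply (fix_id (proj1 HS) Hc) with (x0 := u1).
      - intros V HV. apply (G_cont Gg (fun z => V (k z))). apply (G_cont Gk); auto.
      - intro z; rewrite (G_p Gk), (G_p Gg); auto.
      - rewrite E1, <- E2, k1; auto. }
    apply functional_extensionality; intro z.
    rewrite <- (k2 (g z)). change (h (k (g z)) = h z).
    change (k (g z)) with ((fun z => k (g z)) z). rewrite Hf; auto.
  - intro x; split.
    + intros [u [Uu E]]. apply (pi_eq HS) in E. destruct E as [h [Gh <-]].
      exists (exist _ h Gh); simpl. exists u; auto.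
    + intros [[g Gg] [u [Uu <-]]]; simpl. exists u; split; auto. symmetry; apply (pi_G HS); auto.
  - intros [g Gg]; simpl. split; [|split; [|split; [|split]]].
    + intros x [u [Uu <-]]. exists u; split; auto. symmetry; apply (pi_G HS); auto.
    + apply (InjgU g Gg).
    + intros xi [u [Uu <-]]. exists (g u); split; [exists u; auto|apply (pi_G HS); auto].
    + intros V HV. exists (fun x => V (orbit_proj (deck_preserving tX p S) x)); split; [exact HV|].
      intros; tauto.
    + intros W HW.
      exists (image (orbit_proj (deck_preserving tX p S)) (fun x => W x /\ image g U x)); split.
      * apply (pi_open HS). apply open_setI; auto. apply So; apply (G_S Gg); auto.
      * intros x Hx; split.
        -- intro Wx; exists x; auto.
        -- intros [y [[Wy Hy] E]]. assert (y = x) as <-; auto. apply (InjgU g Gg); auto.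
Qed.

Lemma pi_covering {X Y} (tX : topology X) (tY : topology Y) p S :
  overlay_structure tX tY p S -> connected tX ->
  covering_structure tX (orbit_topology tX (deck_preserving tX p S))
    (orbit_proj (deck_preserving tX p S)) S.
Proof.
  intros HS Hc. pose proof HS as [[So [Sc [Ss Sd]]] Hst].
  split; [auto|split; [auto|split]].
  - intros U SU. split; [auto|].
    exists {g | deck_preserving tX p S g}, (fun g => image (proj1_sig g) U).
    split; [exact (pi_decomp HS Hc _ SU)|].
    exists (exist _ (fun y => y) (G_id tX p S)); simpl. rewrite image_id. tauto.
  - intros U SU.
    exists {g | deck_preserving tX p S g}, (fun g => image (proj1_sig g) U).
    split; [|exact (pi_decomp HS Hc _ SU)].
    intros [g Gg]; simpl; apply (G_S Gg); auto.
Qed.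

Lemma overlay_act {X Y} (tX : topology X) (tY : topology Y) p S :
  overlay_structure tX tY p S -> connected tX ->
  overlay_action tX (deck_preserving tX p S) S.
Proof.
  intros HS Hc. split; [exact (free_G HS Hc)|split; [exact (pi_covering HS Hc)|]].
  intro x. split; [apply (star_open HS)|].
  intros g Gg [y [Hy [z [Hz E]]]].
  apply (free_G HS Hc Gg (x := z)).
  apply (slice_inj (proj2 HS x)); auto. rewrite E; auto. apply (G_p Gg).
Qed.

Local Notation GG tX p S := (deck_preserving tX p S).
Local Notation PI tX p S := (orbit_proj (deck_preserving tX p S)).
Local Notation TQ tX p S := (orbit_topology tX (deck_preserving tX p S)).

Definition qmap {X Y} (tX : topology X) (p : X -> Y) S
  (xi : orbit_space (GG tX p S)) : Y :=
  p (proj1_sig (constructive_indefinite_description _ (proj2_sig xi))).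
Arguments qmap {X Y} tX p S xi.

Lemma q_pi {X Y} (tX : topology X) (tY : topology Y) p S :
  overlay_structure tX tY p S -> forall x, qmap tX p S (PI tX p S x) = p x.
Proof.
  intros HS x. unfold qmap.
  destruct (constructive_indefinite_description _ (proj2_sig (PI tX p S x))) as [x' Hx']; simpl.
  simpl in Hx'.
  assert (E : PI tX p S x = PI tX p S x') by (apply sig_ext; exact Hx').
  apply (pi_eq HS) in E. destruct E as [h [Gh <-]]. apply (G_p Gh).
Qed.

Lemma q_slice_gen {X Y} (tX : topology X) (tY : topology Y) p S :
  continuous tX tY p -> overlay_structure tX tY p S -> forall (A : X -> Prop) (F : (X -> Prop) -> Prop),
  (forall V, F V -> open tX V /\ homeo_onto tX tY p V (image p A)) ->
  (forall x, image p A (p x) -> exists V, F V /\ V x) ->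
  F A ->
  (forall V h, F V -> GG tX p S h -> F (image h V)) ->
  (forall V1 V2 z, F V1 -> F V2 -> V1 z -> V2 z -> V1 = V2) ->
  exists (I : Type) (Fm : I -> orbit_space (GG tX p S) -> Prop),
    sheet_decomp (TQ tX p S) tY (qmap tX p S) (image (PI tX p S) A) Fm /\
    (exists t, forall xi, Fm t xi <-> image (PI tX p S) A xi) /\
    (forall i, exists V, F V /\ Fm i = image (PI tX p S) V).
Proof.
  intros Hp HS A F Fa Fb FA Fe Ff.
  assert (Eimg : image (qmap tX p S) (image (PI tX p S) A) = image p A).
  { apply pext; intro y; split.
    - intros [xi [[a [Aa <-]] <-]]. rewrite (q_pi HS). exists a; auto.
    - intros [a [Aa <-]]. exists (PI tX p S a); split; [exists a; auto|apply (q_pi HS)]. }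
  exists {W : orbit_space (GG tX p S) -> Prop | exists V, F V /\ W = image (PI tX p S) V},
         (fun W => proj1_sig W).
  split; [|split].
  - unfold sheet_decomp, homeo_onto; rewrite Eimg. split; [|split; [|split]].
    + intros [W [V [FV ->]]]; simpl. apply (pi_open HS). apply (Fa V FV).
    + intros [W1 [V1 [FV1 ->]]] [W2 [V2 [FV2 ->]]] xi; simpl.
      intros [a [Va <-]] [b [Vb E]]. apply sig_ext; simpl.
      apply (pi_eq HS) in E. destruct E as [h [Gh <-]].
      assert (E2 : image h V2 = V1).
      { apply (Ff _ _ (h b)); auto. exists b; auto. }
      rewrite <- E2. apply (pi_image_G HS); auto.
    + intro xi. destruct (pi_surj xi) as [x ->]. rewrite (q_pi HS). split.
      * intro H. destruct (Fb x H) as [V [FV Vx]].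
        exists (exist _ (image (PI tX p S) V) (ex_intro _ V (conj FV eq_refl))); simpl.
        exists x; auto.
      * intros [[W [V [FV ->]]] Hx]; simpl in Hx. destruct Hx as [v [Vv E]].
        apply (pi_eq HS) in E. destruct E as [h [Gh <-]]. rewrite (G_p Gh).
        destruct (Fa V FV) as [_ [Hm _]]. apply Hm; auto.
    + intros [W [V [FV ->]]]; simpl.
      destruct (Fa V FV) as [OV [Hm [Hi [Hs [Hc1 Hc2]]]]].
      split; [|split; [|split; [|split]]].
      * intros xi [v [Vv <-]]. rewrite (q_pi HS). apply Hm; auto.
      * intros x1 x2 [a [Va <-]] [b [Vb <-]]. rewrite !(q_pi HS). intro E.
        rewrite (Hi a b Va Vb E); auto.
      * intros y Hy. destruct (Hs y Hy) as [v [Vv <-]].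
        exists (PI tX p S v); split; [exists v; auto|apply (q_pi HS)].
      * intros Vy HVy. exists (fun xi => Vy (qmap tX p S xi)); split; [|intros; tauto].
        change (open tX (fun x => Vy (qmap tX p S (PI tX p S x)))).
        replace (fun x => Vy (qmap tX p S (PI tX p S x))) with (fun x => Vy (p x)).
        -- apply Hp; auto.
        -- apply pext; intro x; rewrite (q_pi HS); tauto.
      * intros W HW.
        destruct (Hc2 (fun x => W (PI tX p S x)) HW) as [Vy [HVy HV]].
        exists Vy; split; auto.
        intros xi [a [Va <-]]. rewrite (q_pi HS). apply HV; auto.
  - exists (exist _ (image (PI tX p S) A) (ex_intro _ A (conj FA eq_refl))); simpl; tauto.
  - intros [W [V [FV ->]]]; simpl. exists V; auto.
Qed.

Lemma star_img_sub {X Y} (tX : topology X) (tY : topology Y) p S :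
  overlay_structure tX tY p S -> forall x x', p x' = p x ->
  forall y, image p (star S x') y -> image p (star S x) y.
Proof.
  intros HS x x' E y [z [[U [SU [Ux' Uz]]] <-]].
  pose proof HS as [[So [Sc [Ss Sd]]] Hst].
  destruct (Sd U SU) as [J [F [FS Fdec]]].
  pose proof Fdec as [Fo [Fd [Fc Fh]]].
  destruct (proj1 (Fc x) (ex_intro _ x' (conj Ux' E))) as [j Fjx].
  destruct (proj2 (sheet_img Fdec j (p z)) (ex_intro _ z (conj Uz eq_refl))) as [w [Fw Ew]].
  exists w; split; auto. exists (F j); auto.
Qed.

Lemma star_img {X Y} (tX : topology X) (tY : topology Y) p S :
  overlay_structure tX tY p S -> forall x x', p x' = p x ->
  image p (star S x') = image p (star S x).
Proof.
  intros HS x x' E. apply pext; intro y; split; apply (star_img_sub HS); auto.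
Qed.

Lemma star_G {X Y} (tX : topology X) (tY : topology Y) p S :
  overlay_structure tX tY p S -> forall h x, deck_preserving tX p S h ->
  image h (star S x) = star S (h x).
Proof.
  intros HS h x Gh. apply pext; intro z; split.
  - intros [y [[U [SU [Ux Uy]]] <-]]. exists (image h U); split; [apply (G_S Gh); auto|].
    split; [exists x; auto|exists y; auto].
  - intros [U [SU [Uhx Uz]]].
    destruct (G_inv HS Gh) as [k [Gk [k1 k2]]].
    exists (k z); split; auto.
    exists (image k U); split; [apply (G_S Gk); auto|].
    split; [exists (h x); auto|exists z; auto].
Qed.

Lemma star_pi {X Y} (tX : topology X) (tY : topology Y) p S :
  overlay_structure tX tY p S -> forall x,
  star (image_family (PI tX p S) S) (PI tX p S x) = image (PI tX p S) (star S x).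
Proof.
  intros HS x. apply pext; intro zeta; split.
  - intros [W [[U [SU ->]] [[u [Uu E]] [u' [Uu' <-]]]]].
    apply (pi_eq HS) in E. destruct E as [h [Gh <-]].
    exists (h u'); split.
    + exists (image h U); split; [apply (G_S Gh); auto|split; [exists u; auto|exists u'; auto]].
    + apply (pi_G HS); auto.
  - intros [y [[U [SU [Ux Uy]]] <-]].
    exists (image (PI tX p S) U); split; [exists U; auto|].
    split; [exists x; auto|exists y; auto].
Qed.

Lemma q_overlay {X Y} (tX : topology X) (tY : topology Y) p S :
  continuous tX tY p -> overlay_structure tX tY p S ->
  overlay_structure (TQ tX p S) tY (qmap tX p S) (image_family (PI tX p S) S).
Proof.
  intros Hp HS. pose proof HS as [[So [Sc [Ss Sd]]] Hst].
  assert (Hsl : forall U, S U -> exists (I : Type) (Fm : I -> orbit_space (GG tX p S) -> Prop),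
    sheet_decomp (TQ tX p S) tY (qmap tX p S) (image (PI tX p S) U) Fm /\
    (exists t, forall xi, Fm t xi <-> image (PI tX p S) U xi) /\
    (forall i, exists V, (S V /\ image p V = image p U) /\ Fm i = image (PI tX p S) V)).
  { intros U SU. apply (q_slice_gen Hp HS).
    - intros V [SV E]. split; auto. rewrite <- E. apply slice_homeo; auto.
    - intros x Hx. destruct (Sd U SU) as [J [F [FS Fdec]]].
      pose proof Fdec as [Fo [Fd [Fc Fh]]].
      destruct (proj1 (Fc x) Hx) as [j Fj]. exists (F j); split; auto. split; auto.
      apply pext; apply (sheet_img Fdec).
    - auto.
    - intros V h [SV E] Gh. split; [apply (G_S Gh); auto|]. rewrite <- E.
      apply pext; intro y; split.
      + intros [b [[a [Va <-]] <-]]. exists a; split; auto. symmetry; apply (G_p Gh).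
      + intros [a [Va <-]]. exists (h a); split; [exists a; auto|apply (G_p Gh)].
    - intros V1 V2 z [SV1 E1] [SV2 E2] H1 H2. apply (same_sheet HS z); auto.
      rewrite E1, E2; tauto. }
  split; [split; [|split; [|split]]|].
  - intros W [U [SU ->]]. apply (pi_open HS); auto.
  - intro xi. destruct (pi_surj xi) as [x ->]. destruct (Sc x) as [U [SU Ux]].
    exists (image (PI tX p S) U); split; [exists U; auto|exists x; auto].
  - intros W [U [SU ->]]. split; [apply (pi_open HS); auto|].
    destruct (Hsl U SU) as [I [Fm [D [T _]]]]. exists I, Fm; auto.
  - intros W [U [SU ->]].
    destruct (Hsl U SU) as [I [Fm [D [_ M]]]]. exists I, Fm; split; auto.
    intro i. destruct (M i) as [V [[SV _] ->]]. exists V; auto.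
  - intro xi. destruct (pi_surj xi) as [x ->]. rewrite (star_pi HS).
    split; [apply (pi_open HS); apply (star_open HS)|].
    destruct (q_slice_gen Hp HS (A := star S x)
      (fun V => exists x', p x' = p x /\ V = star S x')) as [I [Fm [D [T _]]]].
    + intros V [x' [E ->]]. split; [apply (star_open HS)|].
      rewrite <- (star_img HS _ _ E). apply slice_homeo; auto.
    + intros y [z [[U [SU [Ux Uz]]] Ez]].
      destruct (Sd U SU) as [J [F [FS Fdec]]].
      pose proof Fdec as [Fo [Fd [Fc Fh]]].
      destruct (proj1 (Fc y) (ex_intro _ z (conj Uz Ez))) as [j Fjy].
      destruct (proj2 (sheet_img Fdec j (p x)) (ex_intro _ x (conj Ux eq_refl))) as [x' [Fx' Ex']].
      exists (star S x'); split; [exists x'; auto|]. exists (F j); auto.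
    + exists x; auto.
    + intros V h [x' [E ->]] Gh. exists (h x'); split.
      * rewrite (G_p Gh); auto.
      * apply (star_G HS); auto.
    + intros V1 V2 z [x1 [E1 ->]] [x2 [E2 ->]] H1 H2.
      assert (x1 = x2) as ->; auto.
      destruct H1 as [U1 [SU1 [U1x U1z]]]. destruct H2 as [U2 [SU2 [U2x U2z]]].
      apply (slice_inj (Hst z)); [exists U1; auto|exists U2; auto|congruence].
    + exists I, Fm; auto.
Qed.

Theorem proposition5p5 (X Y : Type) (tX : topology X) (tY : topology Y)
  (p : X -> Y) (S : (X -> Prop) -> Prop) :
  continuous tX tY p ->
  overlay_structure tX tY p S ->
  connected tX ->
  overlay_action tX (deck_preserving tX p S) S /\
  exists q : orbit_space (deck_preserving tX p S) -> Y,
    (forall x, p x = q (orbit_proj (deck_preserving tX p S) x)) /\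
    continuous (orbit_topology tX (deck_preserving tX p S)) tY q /\
    overlay_structure (orbit_topology tX (deck_preserving tX p S)) tY q
      (image_family (orbit_proj (deck_preserving tX p S)) S).
Proof.
  intros Hp HS Hc. split; [exact (overlay_act HS Hc)|].
  exists (qmap tX p S). split; [|split].
  - intro x; symmetry; apply (q_pi HS).
  - intros V HV. change (open tX (fun x => V (qmap tX p S (PI tX p S x)))).
    replace (fun x => V (qmap tX p S (PI tX p S x))) with (fun x => V (p x)).
    + apply Hp; auto.
    + apply pext; intro x; rewrite (q_pi HS); tauto.
  - exact (q_overlay Hp HS).
Qed.
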